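(* In the multi-product pricing model of the context with a positive vector $f\in\mathbb{R}^n$, suppose that (P1) for every $j\in M$ and every $i\in N$, $d_{ij}(p)$ is (weakly) increasing in $p_k$ for every $k\ne i$; and (P2) for every $j\in M$, $\sum_{i\in N}f_id_{ij}(p)$ is (weakly) decreasing in $p_i$ for every $i\in N$. Then Assumption A1 holds, i.e. $G(q)\le H(q)$ for all $q\ge0$.
   Context: Products $N=\{1,\dots,n\}$, customer types $M=\{1,\dots,m\}$, non-negative demand functions $d_{ij}:\mathbb{R}^n_{\ge0}\to\mathbb{R}_{\ge0}$ (demand for product $i$ by type $j$ at price vector $p$); $R_j(p)=\sum_ip_id_{ij}(p)$; weights $\theta_j>0$ with $\sum_j\theta_j=1$. For each $j$, $\bar p^j=(\bar p_{1j},\dots,\bar p_{nj})$ is a maximizer of $R_j$ over $p\ge0$ with positive finite components. For $q\ge 0$, $\delta_{ij}(q):=1$ if $q\le\bar p_{ij}/f_i$ and $0$ otherwise, $G(q):=\sum_j\theta_j\sum_if_id_{ij}(\bar p^j)\delta_{ij}(q)$, and $H(q):=\sum_j\theta_j\sum_if_id_{ij}(qf)$. Assumption A1 is the statement $G(q)\le H(q)$ for all $q\ge0$. *)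

(* Defs.v *)
From mathcomp Require Import all_boot all_order all_algebra.
Set Implicit Arguments. Unset Strict Implicit. Unset Printing Implicit Defensive.
Import Order.TTheory GRing.Theory Num.Theory.
Local Open Scope ring_scope.

Section Pricing.
Variables (R : realFieldType) (n m : nat).

Definition nonneg_price (p : 'I_n -> R) : Prop := forall i, 0 <= p i.

Definition set_price (p : 'I_n -> R) (k : 'I_n) (t : R) : 'I_n -> R :=
  fun l => if l == k then t else p l.

(* demand d i j p : demand for product i by type j at prices p *)
Variable d : 'I_n -> 'I_m -> ('I_n -> R) -> R.

Definition revenue (j : 'I_m) (p : 'I_n -> R) : R := \sum_(i < n) p i * d i j p.

Variables (theta : 'I_m -> R) (f : 'I_n -> R) (pbar : 'I_m -> 'I_n -> R).

Definition delta (i : 'I_n) (j : 'I_m) (q : R) : R :=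
  if q <= pbar j i / f i then 1 else 0.

Definition Gfun (q : R) : R :=
  \sum_(j < m) theta j * \sum_(i < n) f i * d i j (pbar j) * delta i j q.

Definition Hfun (q : R) : R :=
  \sum_(j < m) theta j * \sum_(i < n) f i * d i j (fun k => q * f k).

Definition assumption_A1 : Prop := forall q : R, 0 <= q -> Gfun q <= Hfun q.

End Pricing.

(* Main.v *)
Require Import Defs.
From mathcomp Require Import all_boot all_order all_algebra.
Import Order.TTheory GRing.Theory Num.Theory.
Local Open Scope ring_scope.

From Stdlib Require Import FunctionalExtensionality.

Lemma mono_path (R : realFieldType) (n : nat) (g : ('I_n -> R) -> R) (A : pred 'I_n) :
  (forall p k t t', nonneg_price p -> 0 <= t -> t <= t' -> A k ->
     g (set_price p k t) <= g (set_price p k t')) ->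
  forall p p', nonneg_price p -> (forall l, p l <= p' l) ->
  (forall l, ~~ A l -> p l = p' l) -> g p <= g p'.
Proof.
move=> Hg p p' p0 pp' eqA.
pose q (r : nat) := fun l : 'I_n => if (l < r)%N then p' l else p l.
have q0 : forall r, nonneg_price (q r).
  move=> r l; rewrite /q; case: ifP => _ //; exact: le_trans (p0 l) (pp' l).
suff H : forall r, g p <= g (q r).
  have -> : p' = q n by apply: functional_extensionality => l; rewrite /q ltn_ord.
  exact: H.
elim=> [|r IH].
  have -> : q 0%N = p by apply: functional_extensionality => l; rewrite /q ltn0.
  exact: lexx.
apply: (le_trans IH).
case: (ltnP r n) => rn; last first.
  have -> : q r.+1 = q r.
    apply: functional_extensionality => l; rewrite /q.
    by rewrite ltnS (leq_trans (ltnW (ltn_ord l)) rn) (leq_trans (ltn_ord l) rn).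
  exact: lexx.
pose k := Ordinal rn.
have E1 : q r = set_price (q r) k (p k).
  apply: functional_extensionality => l; rewrite /set_price /q.
  case: eqP => [->|//]; by rewrite /= ltnn.
have E2 : q r.+1 = set_price (q r) k (p' k).
  apply: functional_extensionality => l; rewrite /set_price /q.
  case: eqP => [->|/eqP ne]; first by rewrite /= ltnS leqnn.
  rewrite ltnS leq_eqVlt; have -> : (nat_of_ord l == r) = false by apply/negP => /eqP e; move/negP: ne; apply; apply/eqP/val_inj; exact: e.
  done.
rewrite E2 {1}E1.
case Ak: (A k); first by apply: Hg => //; try exact: p0; exact: pp'.
rewrite (eqA k) ?Ak //; exact: lexx.
Qed.

Theorem proposition1 (R : realFieldType) (n m : nat)
  (d : 'I_n -> 'I_m -> ('I_n -> R) -> R)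
  (theta : 'I_m -> R) (f : 'I_n -> R) (pbar : 'I_m -> 'I_n -> R)
  (* demands are non-negative on R^n_{>=0} *)
  (d_ge0 : forall i j p, nonneg_price p -> 0 <= d i j p)
  (* weights *)
  (theta_gt0 : forall j, 0 < theta j)
  (theta_sum : \sum_(j < m) theta j = 1)
  (* pbar^j maximizes R_j over p >= 0, with positive (finite) components *)
  (pbar_gt0 : forall j i, 0 < pbar j i)
  (pbar_max : forall j p, nonneg_price p -> revenue d j p <= revenue d j (pbar j))
  (* f is a positive vector *)
  (f_gt0 : forall i, 0 < f i)
  (* (P1): d_ij weakly increasing in p_k for k <> i *)
  (P1 : forall j i k, k != i -> forall p t t', nonneg_price p -> 0 <= t -> t <= t' ->
          d i j (set_price p k t) <= d i j (set_price p k t'))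
  (* (P2): sum_i f_i d_ij weakly decreasing in p_k for every k *)
  (P2 : forall j k p t t', nonneg_price p -> 0 <= t -> t <= t' ->
          \sum_(i < n) f i * d i j (set_price p k t') <=
          \sum_(i < n) f i * d i j (set_price p k t)) :
  assumption_A1 d theta f pbar.
Proof.
move=> q q0; rewrite /Gfun /Hfun.
apply: ler_sum => j _; apply: ler_wpM2l; first exact: ltW.
pose pq := fun k : 'I_n => q * f k.
pose pm := fun l : 'I_n => Num.max (pbar j l) (pq l).
have pb0 : nonneg_price (pbar j) by move=> l; exact: ltW.
have pq0 : nonneg_price pq by move=> l; rewrite /pq mulr_ge0 // ltW.
have pm0 : nonneg_price pm by move=> l; rewrite /pm le_max (pb0 l).
apply: (@le_trans _ _ (\sum_(i < n) f i * d i j pm)).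
  apply: ler_sum => i _; rewrite /delta.
  case: ifP => [hq|_]; last by by rewrite mulr0 mulr_ge0 ?d_ge0 // ltW.
  rewrite mulr1; apply: ler_wpM2l; first exact: ltW.
  apply: (@mono_path R n (d i j) (fun k => k != i)) => //.
  - move=> p k t t' p0' t0 tt' ki; exact: P1.
  - by move=> l; rewrite /pm le_max lexx.
  - move=> l; rewrite negbK => /eqP ->; rewrite /pm max_l //.
    by rewrite /pq -ler_pdivlMr.
rewrite -lerN2.
apply: (@mono_path R n (fun p => - \sum_(i < n) f i * d i j p) predT _ pq pm) => //.
- move=> p k t t' p0' t0 tt' _; rewrite lerN2; exact: P2.
- by move=> l; rewrite /pm le_max lexx orbT.
Qed.
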